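(* Let $\mathcal{H}=(V,E)$ be a linear hypergraph without loop with $n$ vertices, and suppose $E=E'\sqcup E''$ where, with $\mathcal{H}'=(V,E')$: $\mathrm{ar}(\mathcal{H}')\ge\sqrt{n}$; $|e|<\sqrt{n}$ for all $e\in E''$; and for every $e\in E''$ there is $x_0\in e$ with $\mathrm{deg}_{\mathcal{H}}(x_0)\le|e|$. Then $\mathrm{q}(\mathcal{H})\le n$.
   Context: A hypergraph $\mathcal{H}=(V,E)$ has a finite vertex set $V$ and a finite set $E$ of nonempty subsets of $V$ (hyperedges); a loop is a hyperedge with one element; linear means distinct hyperedges share at most one vertex. $\mathrm{deg}_{\mathcal{H}}(x)$ is the number of hyperedges containing $x$. The antirank $\mathrm{ar}$ is the minimum cardinality of a hyperedge ($\infty$ if there are none). The chromatic index $\mathrm{q}(\mathcal{H})$ is the least number of colors in a coloring of hyperedges where distinct intersecting hyperedges get different colors. *)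

(* Defs.v *)
From mathcomp Require Import all_boot.
Set Implicit Arguments. Unset Strict Implicit. Unset Printing Implicit Defensive.

Definition hypergraph (V : finType) (E : {set {set V}}) : Prop :=
  forall e, e \in E -> e != set0.

Definition loopless (V : finType) (E : {set {set V}}) : Prop :=
  forall e, e \in E -> #|e| != 1.

Definition linear (V : finType) (E : {set {set V}}) : Prop :=
  forall e f, e \in E -> f \in E -> e != f -> #|e :&: f| <= 1.

Definition hdeg (V : finType) (E : {set {set V}}) (x : V) : nat :=
  #|[set e in E | x \in e]|.

(* Antirank: minimum cardinality of a hyperedge, None standing for +infinity.
   (Every hyperedge has at most #|V| elements, so #|V| is a neutral start.) *)
Definition antirank (V : finType) (E : {set {set V}}) : option nat :=
  if E == set0 then None else Some (\big[minn/#|V|]_(e in E) #|e|).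

Definition edge_coloring (V : finType) (E : {set {set V}}) (k : nat) :=
  {ffun {e : {set V} | e \in E} -> 'I_k}.

Definition proper_coloringb (V : finType) (E : {set {set V}}) (k : nat)
    (c : edge_coloring E k) : bool :=
  [forall e, forall f, (e != f) && (val e :&: val f != set0) ==> (c e != c f)].

Definition colorable (V : finType) (E : {set {set V}}) (k : nat) : bool :=
  [exists c : edge_coloring E k, proper_coloringb c].

Lemma colorable_card (V : finType) (E : {set {set V}}) :
  colorable E #|{: {e : {set V} | e \in E}}|.
Proof.
apply/existsP; exists [ffun e => enum_rank e]; apply/forallP => e; apply/forallP => f.
apply/implyP => /andP [nef _]; rewrite !ffunE.
by apply: contra nef => /eqP /enum_rank_inj ->.
Qed.

Lemma colorable_ex (V : finType) (E : {set {set V}}) : exists k, colorable E k.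
Proof. by exists #|{: {e : {set V} | e \in E}}|; exact: colorable_card. Qed.

Definition chromatic_index (V : finType) (E : {set {set V}}) : nat :=
  ex_minn (colorable_ex E).

(* Main.v *)
Require Import Defs.
From mathcomp Require Import all_boot.
Set Implicit Arguments. Unset Strict Implicit. Unset Printing Implicit Defensive.

Lemma sum_card_disj (T I : finType) (A : {set I}) (F : I -> {set T}) :
  {in A &, forall i j, i != j -> [disjoint F i & F j]} ->
  \sum_(i in A) #|F i| = #|\bigcup_(i in A) F i|.
Proof.
move=> dis.
pose F' i := if i \in A then F i else set0.
have -> : \bigcup_(i in A) F i = \bigcup_i F' i.
  apply/setP => x; apply/idP/idP.
    by case/bigcupP => i iA xF; apply/bigcupP; exists i; rewrite // /F' iA.
  by case/bigcupP => i _; rewrite /F'; case: ifP => [iA xF|]; [apply/bigcupP; exists i | rewrite inE].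
rewrite -sum1_card (partition_disjoint_bigcup addn (fun _ => 1)).
  rewrite big_mkcond /=; apply: eq_bigr => i _; rewrite /F'.
  by case: ifP => _; rewrite ?sum1_card ?cards0.
move=> i j nij; rewrite /F'; case: ifP => iA; case: ifP => jA; last 3 first.
- by rewrite -setI_eq0 setI0.
- by rewrite -setI_eq0 set0I.
- by rewrite -setI_eq0 set0I.
exact: dis.
Qed.

Lemma card_bigcup_le (T I : finType) (A : {set I}) (F : I -> {set T}) :
  #|\bigcup_(i in A) F i| <= \sum_(i in A) #|F i|.
Proof.
elim/big_rec2: _ => [|i y1 y2 _ H]; first by rewrite cards0.
by apply: leq_trans (leq_card_setU _ _) _; rewrite leq_add2l.
Qed.


Definition nbh (V : finType) (G : {set {set V}}) (e : {set V}) :=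
  [set f in G | (f != e) && (f :&: e != set0)].

Definition proper_on (V : finType) (F : {set {set V}}) n (c : {set V} -> nat) :=
  (forall f, f \in F -> c f < n) /\
  (forall f g, f \in F -> g \in F -> f != g -> f :&: g != set0 -> c f != c g).

Lemma free_color (V : finType) (N : {set {set V}}) (c : {set V} -> nat) n :
  #|N| < n -> exists2 i, i < n & forall f, f \in N -> c f != i.
Proof.
move=> Nn.
case: (boolP [exists i : 'I_n, [forall f in N, c f != i]]).
  case/existsP => i /forall_inP H; exists i => //; exact: ltn_ord.
move=> /existsPn H; exfalso.
have : size (iota 0 n) <= size [seq c f | f <- enum N].
  apply: uniq_leq_size; first exact: iota_uniq.
  move=> j; rewrite mem_iota add0n => /andP[_ jn].
  have := H (Ordinal jn); rewrite negb_forall_in => /exists_inP [f fN /negPn /eqP cf].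
  by apply/mapP; exists f; rewrite ?mem_enum.
by rewrite size_iota size_map -cardE leqNgt Nn.
Qed.

Lemma greedy (V : finType) (F : {set {set V}}) (n : nat) :
  (forall G : {set {set V}}, G \subset F -> G != set0 -> exists2 e, e \in G & #|nbh G e| < n) ->
  exists c, proper_on F n c.
Proof.
have [m] := ubnP #|F|; elim: m F => // m IH F ltF H.
case: (eqVneq F set0) => [->|F0].
  by exists (fun _ => 0); split => f; rewrite inE.
have [e eF small] := H F (subxx _) F0.
have ltF' : #|F :\ e| < m by rewrite (cardsD1 e F) eF in ltF.
have [c' [c'n c'p]] := IH (F :\ e) ltF' (fun (G : {set {set V}}) (sG : G \subset F :\ e) => H G (subset_trans sG (subsetDl _ _))).
have [i ilt ifree] := free_color c' small.
exists (fun f => if f == e then i else c' f); split.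
  by move=> f fF; case: eqP => // /eqP fe; apply: c'n; rewrite !inE fe.
move=> f g fF gF nfg fg0.
case: (eqVneq f e) => [fe|fe]; case: (eqVneq g e) => [ge|ge].
- by rewrite fe ge eqxx in nfg.
- rewrite eq_sym; apply: ifree; rewrite !inE gF ge /= -fe.
  by rewrite setIC.
- apply: ifree; rewrite !inE fF fe /= -ge //.
- by apply: c'p => //; rewrite !inE ?fe ?ge.
Qed.

Lemma chi_le (V : finType) (E : {set {set V}}) n c :
  proper_on E n c -> chromatic_index E <= n.
Proof.
case=> cn cp.
rewrite /chromatic_index; case: ex_minnP => m _ Hmin; apply: Hmin.
apply/existsP.
exists [ffun e : {e : {set V} | e \in E} => Ordinal (cn (val e) (valP e))].
apply/forallP => e; apply/forallP => f; apply/implyP => /andP[nef ef0].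
rewrite !ffunE; apply/negP => /eqP [] /eqP; apply/negP.
by apply: cp => //; [exact: valP | exact: valP].
Qed.

Lemma two_common (V : finType) (G : {set {set V}}) f g u v :
  linear G -> f \in G -> g \in G -> u \in f -> u \in g -> v \in f -> v \in g ->
  u != v -> f = g.
Proof.
move=> lin fG gG uf ug vf vg uv; apply/eqP; apply: contraT => nfg.
have := lin f g fG gG nfg.
have : [set u; v] \subset f :&: g.
  by apply/subsetP => z; rewrite !inE => /orP[]/eqP->; rewrite ?uf ?ug ?vf ?vg.
move/subset_leq_card; rewrite cards2 uv => H1 H2.
by have := leq_trans H1 H2.
Qed.

Definition Nx (V : finType) (G : {set {set V}}) (e : {set V}) (x : V) :=
  [set f in G | (x \in f) && (f != e)].

Lemma pencil (V : finType) (G : {set {set V}}) e x :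
  linear G -> e \in G -> x \in e ->
  \sum_(f in Nx G e x) #|f :\ x| = #|\bigcup_(f in Nx G e x) (f :\ x)| /\
  \bigcup_(f in Nx G e x) (f :\ x) \subset ~: e.
Proof.
move=> lin eG xe; split.
  apply: sum_card_disj => f g; rewrite !inE => /and3P[fG xf _] /and3P[gG xg _] nfg.
  rewrite -setI_eq0; apply/eqP/setP => z; rewrite !inE.
  apply/negP => /and3P[/andP[zx zf] _ zg].
  by move: nfg; rewrite (two_common lin fG gG zf zg xf xg zx) eqxx.
apply/subsetP => z /bigcupP[f]; rewrite !inE => /and3P[fG xf fe] /andP[zx zf].
apply/negP => ze.
by move: fe; rewrite (two_common lin fG eG zf ze xf xe zx) eqxx.
Qed.

Lemma nbh_sub (V : finType) (G : {set {set V}}) e :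
  nbh G e \subset \bigcup_(x in e) Nx G e x.
Proof.
apply/subsetP => f; rewrite !inE => /and3P[fG fe /set0Pn[z]].
rewrite inE => /andP[zf ze]; apply/bigcupP; exists z => //.
by rewrite !inE fG zf fe.
Qed.
From mathcomp Require Import zify.

Lemma minbad (V : finType) (E G : {set {set V}}) e :
  linear G -> G \subset E -> e \in G -> 2 <= #|e| ->
  ((exists2 x0, x0 \in e & hdeg E x0 <= #|e|) \/ #|V| <= #|e| ^ 2) ->
  (forall f, f \in G -> #|e| <= #|f|) ->
  #|V| <= #|nbh G e| ->
  #|e| ^ 2 = #|V| /\ forall x, x \in e ->
    [/\ #|[set f in G | x \in f]| = #|e|.+1,
        (forall f, f \in G -> x \in f -> #|f| = #|e|) &
        (forall v, v != x -> exists2 f, f \in G & (x \in f) && (v \in f))].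
Proof.
move=> lin GE eG s2 hyp mn bad.
set s := #|e|; set n := #|V|.
have sn : s <= n by apply: max_card.
have ce : #|~: e| = n - s by rewrite cardsCs setCK.
set q := (n - s) %/ (s - 1).
have s1 : 0 < s - 1 by rewrite subn_gt0.
have tbnd : forall x, x \in e -> #|Nx G e x| * (s - 1) <= \sum_(f in Nx G e x) #|f :\ x|.
  move=> x xe; rewrite -sum_nat_const; apply: leq_sum => f.
  rewrite inE => /and3P[fG xf _]; have := cardsD1 x f; rewrite xf /=.
  by have := mn f fG; rewrite -/s; lia.
have tsum : forall x, x \in e -> \sum_(f in Nx G e x) #|f :\ x| <= n - s.
  move=> x xe; have [-> sub] := pencil lin eG xe.
  by rewrite -ce; apply: subset_leq_card.
have tq : forall x, x \in e -> #|Nx G e x| <= q.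
  by move=> x xe; rewrite leq_divRL //; apply: leq_trans (tbnd x xe) (tsum x xe).
have qq : q * (s - 1) <= n - s by apply: leq_divM.
have Sge : n <= \sum_(x in e) #|Nx G e x|.
  apply: (leq_trans bad); apply: leq_trans (card_bigcup_le _ _).
  exact/subset_leq_card/nbh_sub.
case: hyp => [[x0 x0e dx0]|big].
  exfalso.
  have t0 : #|Nx G e x0| <= s - 1.
    have : Nx G e x0 \subset [set f in E | x0 \in f] :\ e.
      apply/subsetP => f; rewrite !inE => /and3P[fG xf fe].
      by rewrite fe xf (subsetP GE f fG).
    move/subset_leq_card.
    have := cardsD1 e [set f in E | x0 \in f]; rewrite [e \in _]inE x0e (subsetP GE e eG) /=.
    move: dx0; rewrite /hdeg -/s => h1 h2 h3; apply: (leq_trans h3); move: h1; rewrite h2; lia.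
  move: Sge; rewrite (big_setD1 x0) //=.
  have : \sum_(x in e :\ x0) #|Nx G e x| <= \sum_(x in e :\ x0) q.
    by apply: leq_sum => x; rewrite !inE => /andP[_ xe]; apply: tq.
  rewrite sum_nat_const; have := cardsD1 x0 e; rewrite x0e /= -/s.
  have : (s - 1) * q <= n - s by rewrite mulnC.
  move=> h1 h2; have -> : #|e :\ x0| = s - 1 by lia.
  clearbody q s n; move: (\sum_(x in e :\ x0) #|Nx G e x|) => S. move: h1 t0 sn s1; move: ((s - 1) * q) => P. move: #|Nx G e x0| => t. lia.
have [qs|qs] := leqP q (s - 1).
  exfalso; move: Sge.
  have : \sum_(x in e) #|Nx G e x| <= \sum_(x in e) q by apply: leq_sum => x; apply: tq.
  rewrite sum_nat_const -/s.
  nia.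
have sq : s ^ 2 = n.
  apply/eqP; rewrite eqn_leq big andbT.
  have : s * (s - 1) <= q * (s - 1) by rewrite leq_mul2r (_ : s <= q) ?orbT //; lia.
  nia.
split => // x xe.
have ts : #|Nx G e x| = s.
  apply/eqP; rewrite eqn_leq.
  have tls : #|Nx G e x| <= s.
    rewrite -(@leq_pmul2r (s - 1)) //; apply: leq_trans (tbnd x xe) _.
    by apply: leq_trans (tsum x xe) _; nia.
  rewrite tls /=; apply: contraT; rewrite -ltnNge => tlt.
  move: Sge; rewrite (big_setD1 x) //=.
  have : \sum_(y in e :\ x) #|Nx G e y| <= \sum_(y in e :\ x) s.
    apply: leq_sum => y; rewrite !inE => /andP[_ ye].
    rewrite -(@leq_pmul2r (s - 1)) //; apply: leq_trans (tbnd y ye) _.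
    by apply: leq_trans (tsum y ye) _; nia.
  rewrite sum_nat_const; have := cardsD1 x e; rewrite xe /= -/s.
  nia.
have deg : [set f in G | x \in f] = e |: Nx G e x.
  apply/setP => f; rewrite !inE; case: (eqVneq f e) => [->|fe]; rewrite ?eG ?xe ?andbT //.
split.
- by rewrite deg cardsU1 ts !inE eqxx !andbF.
- move=> f fG xf; case: (eqVneq f e) => [->//|fe].
  have fN : f \in Nx G e x by rewrite !inE fG xf fe.
  have := tsum x xe; rewrite (big_setD1 f fN) /=.
  have : \sum_(g in Nx G e x :\ f) #|g :\ x| >= \sum_(g in Nx G e x :\ f) (s - 1).
    apply: leq_sum => g; rewrite !inE => /andP[_ /and3P[gG xg _]].
    have := cardsD1 x g; rewrite xg /=; by have := mn g gG; rewrite -/s; lia.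
  rewrite sum_nat_const; have := cardsD1 f (Nx G e x); rewrite fN /= ts.
  have := cardsD1 x f; rewrite xf /=.
  have := mn f fG; rewrite -/s.
  nia.
- move=> v vx; case: (boolP (v \in e)) => ve.
    by exists e => //; rewrite xe ve.
  have [Seq sub] := pencil lin eG xe.
  have Ueq : \bigcup_(f in Nx G e x) (f :\ x) == ~: e.
    rewrite eqEcard sub /= ce -Seq.
    apply: leq_trans (tbnd x xe); rewrite ts; nia.
  have : ~: e \subset \bigcup_(f in Nx G e x) (f :\ x) by rewrite (eqP Ueq).
  move/subsetP/(_ v); rewrite inE ve => /(_ isT) /bigcupP[f].
  by rewrite !inE => /and3P[fG xf _] /andP[_ vf]; exists f; rewrite ?xf ?vf.
Qed.

Definition Full (V : finType) (G : {set {set V}}) (k : nat) :=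
  k ^ 2 = #|V| /\ forall x, 
    [/\ #|[set f in G | x \in f]| = k.+1,
        (forall f, f \in G -> x \in f -> #|f| = k) &
        (forall v, v != x -> exists2 f, f \in G & (x \in f) && (v \in f))].

Lemma inj_card (T1 T2 : finType) (A : {set T1}) (B : {set T2}) (phi : T1 -> T2) :
  {in A &, injective phi} -> (forall a, a \in A -> phi a \in B) -> #|A| <= #|B|.
Proof.
move=> inj mapB; rewrite -(card_in_imset inj); apply: subset_leq_card.
by apply/subsetP => _ /imsetP[a aA ->]; apply: mapB.
Qed.

Lemma full_eq (V : finType) (E G : {set {set V}}) k :
  hypergraph E -> loopless E -> linear E -> G \subset E -> Full G k -> G = E.
Proof.
move=> hyp loop lin GE [_ F]; apply/eqP; rewrite eqEsubset GE /=.
apply/subsetP => g gE.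
have g2 : 1 < #|g|.
  have := loop g gE; have := hyp g gE; rewrite -card_gt0; lia.
case/card_gt1P: g2 => u [v [ug vg uv]].
have vu : v != u by rewrite eq_sym.
have [_ _ cov] := F u; have [f fG /andP[uf vf]] := cov v vu.
by rewrite -(two_common lin (subsetP GE f fG) gE uf ug vf vg uv).
Qed.

Lemma bigmin_le (T : eqType) (r : seq T) (P : pred T) (F : T -> nat) x0 e :
  e \in r -> P e -> \big[minn/x0]_(i <- r | P i) F i <= F e.
Proof.
elim: r => //= a r IH; rewrite inE big_cons => /orP[/eqP<-|er] Pe.
  by rewrite Pe geq_minl.
case: (P a); last exact: IH.
exact: leq_trans (geq_minr _ _) (IH er Pe).
Qed.

Lemma edge_hyp (V : finType) (E E' E'' : {set {set V}}) e :
  hypergraph E -> loopless E -> E = E' :|: E'' ->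
  (match antirank E' with None => True | Some a => #|V| <= a ^ 2 end : Prop) ->
  (forall e, e \in E'' -> exists2 x0, x0 \in e & hdeg E x0 <= #|e|) ->
  e \in E ->
  2 <= #|e| /\ ((exists2 x0, x0 \in e & hdeg E x0 <= #|e|) \/ #|V| <= #|e| ^ 2).
Proof.
move=> hyp loop EU ar H8 eE; split.
  have := loop e eE; have := hyp e eE; rewrite -card_gt0; lia.
have : e \in E' :|: E'' by rewrite -EU.
rewrite inE => /orP[e1|e2]; last by left; apply: H8.
right; move: ar; rewrite /antirank.
have -> : (E' == set0) = false by apply/negbTE/set0Pn; exists e.
move=> H; apply: (leq_trans H); rewrite leq_exp2r //.
by apply: bigmin_le => //; rewrite mem_index_enum.
Qed.

Lemma low_or_full (V : finType) (E E' E'' G : {set {set V}}) :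
  hypergraph E -> loopless E -> linear E -> E = E' :|: E'' ->
  (match antirank E' with None => True | Some a => #|V| <= a ^ 2 end : Prop) ->
  (forall e, e \in E'' -> exists2 x0, x0 \in e & hdeg E x0 <= #|e|) ->
  G \subset E -> G != set0 ->
  (exists2 e, e \in G & #|nbh G e| < #|V|) \/ exists k, Full G k.
Proof.
move=> hyp loop lin EU ar H8 GE G0.
case: (boolP [exists e in G, #|nbh G e| < #|V|]).
  by case/exists_inP => e eG lt; left; exists e.
move/exists_inPn => bad; right.
have linG : linear G.
  by move=> f g fG gG; apply: lin; apply: (subsetP GE).
have minb : forall e, e \in G -> (forall f, f \in G -> #|e| <= #|f|) ->
  #|e| ^ 2 = #|V| /\ forall x, x \in e ->
    [/\ #|[set f in G | x \in f]| = #|e|.+1,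
        (forall f, f \in G -> x \in f -> #|f| = #|e|) &
        (forall v, v != x -> exists2 f, f \in G & (x \in f) && (v \in f))].
  move=> e eG mn.
  have [e2 eh] := edge_hyp hyp loop EU ar H8 (subsetP GE e eG).
  by apply: (@minbad _ E) => //; rewrite leqNgt; apply: bad.
case/set0Pn: G0 => f0 f0G.
case: (arg_minnP (fun f : {set V} => #|f|) f0G) => e eG mn.
have [sq He] := minb e eG mn.
exists #|e|; split => // v.
case: (boolP (v \in e)) => ve; first exact: He.
have [x xe] : exists x, x \in e.
  have [e2 _] := edge_hyp hyp loop EU ar H8 (subsetP GE e eG).
  by apply/set0Pn; rewrite -card_gt0; lia.
have [_ sz cov] := He x xe.
have vx : v != x by apply: contraNneq ve => ->.
have [f fG /andP[xf vf]] := cov v vx.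
have fe := sz f fG xf.
have mnf : forall g, g \in G -> #|f| <= #|g| by move=> g gG; rewrite fe; apply: mn.
have [_ Hf] := minb f fG mnf.
by rewrite -fe; apply: Hf.
Qed.

Lemma affine (V : finType) (E : {set {set V}}) k :
  hypergraph E -> loopless E -> linear E -> Full E k -> E != set0 ->
  exists c, proper_on E #|V| c.
Proof.
move=> hyp loop lin [sq F] E0.
case/set0Pn: E0 => e1 e1E.
have e12 : 1 < #|e1|.
  have := loop e1 e1E; have := hyp e1 e1E; rewrite -card_gt0; lia.
have [x0 x0e1] : exists x, x \in e1 by apply/set0Pn; rewrite -card_gt0; lia.
have k2 : 1 < k by have [_ sz _] := F x0; rewrite -(sz e1 e1E x0e1).
pose P := [set f in E | x0 \in f].
have cP : #|P| = k.+1 by have [d _ _] := F x0.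
have F1 : forall f, f \in E -> x0 \notin f -> exists2 L, L \in P & [disjoint L & f].
  move=> f fE x0f; apply/exists_inP; apply: contraT => /exists_inPn H.
  have : #|P| <= #|f|.
    apply: (@inj_card _ _ _ _ (fun L => odflt x0 [pick z in L :&: f])).
      move=> L1 L2; rewrite !inE => /andP[L1E xL1] /andP[L2E xL2].
      have := H L1; have := H L2; rewrite !inE L1E L2E xL1 xL2 /= -!setI_eq0.
      move=> /(_ isT) /set0Pn[z2 z2i] /(_ isT) /set0Pn[z1 z1i].
      case: pickP => [a|]; last by move/(_ z1); rewrite z1i.
      case: pickP => [b|]; last by move/(_ z2); rewrite z2i.
      rewrite !inE /= => /andP[bL2 bf] /andP[aL1 af] ab; rewrite ab in aL1.
      have bx : b != x0 by apply: contraNneq x0f => <-.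
      exact: two_common lin L1E L2E aL1 bL2 xL1 xL2 bx.
    move=> L; rewrite !inE => /andP[LE xL].
    have := H L; rewrite !inE LE xL /= -setI_eq0 => /(_ isT) /set0Pn[z zi].
    by case: pickP => [a|]; [rewrite inE => /andP[] | move/(_ z); rewrite zi].
  have [_ sz _] := F x0.
  case/set0Pn: (hyp f fE) => w wf.
  have [_ szw _] := F w; rewrite cP (szw f fE wf); lia.
have F2 : forall y L f g, L \in E -> y \notin L -> f \in E -> g \in E ->
    y \in f -> y \in g -> [disjoint f & L] -> [disjoint g & L] -> f = g.
  move=> y L f g LE yL fE gE yf yg fL gL; apply/eqP; apply: contraT => nfg.
  pose Q := [set h in E | y \in h].
  pose M := [set h in Q | ~~ [disjoint h & L]].
  have LM : #|L| <= #|M|.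
    apply: (@inj_card _ _ _ _ (fun z => odflt set0 [pick h in E | (y \in h) && (z \in h)])).
      move=> z1 z2 z1L z2L.
      have z1y : z1 != y by apply: contraNneq yL => <-.
      have z2y : z2 != y by apply: contraNneq yL => <-.
      have [_ _ cov] := F y.
      have [h1 h1E /andP[yh1 zh1]] := cov z1 z1y.
      have [h2 h2E /andP[yh2 zh2]] := cov z2 z2y.
      case: pickP => [a|]; last by move/(_ h1); rewrite h1E yh1 zh1.
      case: pickP => [b|]; last by move/(_ h2); rewrite h2E yh2 zh2.
      move=> /and3P[bE yb z2b] /and3P[aE ya z1a] /= ab; rewrite ab in z1a.
      apply/eqP; apply: contraT => z12.
      have bL := two_common lin bE LE z1a z1L z2b z2L z12.
      by move: yL; rewrite -bL yb.
    move=> z zL.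
    have zy : z != y by apply: contraNneq yL => <-.
    have [_ _ cov] := F y.
    have [h hE /andP[yh zh]] := cov z zy.
    case: pickP => [a|]; last by move/(_ h); rewrite hE yh zh.
    move=> /and3P[aE ya za] /=; rewrite !inE aE ya /= -setI_eq0.
    by apply/set0Pn; exists z; rewrite inE za zL.
  have QM : [set f; g] \subset Q :\: M.
    apply/subsetP => h; rewrite !inE => /orP[]/eqP->; rewrite ?fE ?gE ?yf ?yg ?fL ?gL //.
  have c2 := subset_leq_card QM; rewrite cards2 nfg in c2.
  have cID := cardsID M Q.
  have QMM : Q :&: M = M by apply/setIidPr/subsetP => h; rewrite inE => /andP[].
  have [d _ _] := F y; rewrite -/Q in d; rewrite QMM d in cID.
  case/set0Pn: (hyp L LE) => w wL; have [_ szw _] := F w; rewrite (szw L LE wL) in LM.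
  move: c2 cID LM; move: #|Q :\: M| #|M| => a b; clear; lia.
pose rp (f : {set V}) : {set V} := if x0 \in f then f else odflt set0 [pick L : {set V} in P | [disjoint L & f]].
have repP : forall f, f \in E -> rp f \in P.
  move=> f fE; rewrite /rp; case: ifP => xf; first by rewrite inE fE xf.
  have [L LP Lf] := F1 f fE (negbT xf).
  by case: pickP => [a /andP[]|] //; move/(_ L); rewrite LP Lf.
have repD : forall f, f \in E -> x0 \notin f -> [disjoint rp f & f].
  move=> f fE xf; rewrite /rp (negbTE xf).
  have [L LP Lf] := F1 f fE xf.
  by case: pickP => [a /andP[]|] //; move/(_ L); rewrite LP Lf.
exists (fun f => index (rp f) (enum P)); split.
  move=> f fE; rewrite -sq.
  apply: (@leq_trans (size (enum P))); first by rewrite index_mem mem_enum repP.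
  by rewrite -cardE cP; nia.
move=> f g fE gE nfg fg0; apply/eqP => eqi.
have rfg : rp f = rp g.
  by rewrite -(nth_index set0 (_ : rp f \in enum P)) ?mem_enum ?repP // eqi nth_index ?mem_enum ?repP.
have nd : forall a b : {set V}, a :&: b != set0 -> ~~ [disjoint a & b] by move=> a b; rewrite -setI_eq0.
case: (boolP (x0 \in f)) => xf; case: (boolP (x0 \in g)) => xg.
- by move: rfg; rewrite /rp xf xg => fg; rewrite fg eqxx in nfg.
- have := repD g gE xg; rewrite -rfg /rp xf => d.
  by move: (nd _ _ fg0); rewrite d.
- have := repD f fE xf; rewrite rfg /rp xg => d.
  by move: (nd _ _ fg0); rewrite disjoint_sym d.
- case/set0Pn: fg0 => y; rewrite inE => /andP[yf yg].
  have Lf := repD f fE xf; have Lg := repD g gE xg; rewrite -rfg in Lg.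
  have LE : rp f \in E by have := repP f fE; rewrite inE => /andP[].
  have yL : y \notin rp f.
    by apply: contraTN Lf => yL; rewrite -setI_eq0; apply/set0Pn; exists y; rewrite inE yL yf.
  have := F2 y (rp f) f g LE yL fE gE yf yg.
  rewrite disjoint_sym Lf disjoint_sym Lg => /(_ isT isT) fg.
  by rewrite fg eqxx in nfg.
Qed.

Theorem corollary5p7 (V : finType) (E E' E'' : {set {set V}}) :
  hypergraph E -> loopless E -> linear E ->
  E = E' :|: E'' -> [disjoint E' & E''] ->
  (match antirank E' with None => True | Some a => #|V| <= a ^ 2 end : Prop) ->
  (forall e, e \in E'' -> #|e| ^ 2 < #|V|) ->
  (forall e, e \in E'' -> exists2 x0, x0 \in e & hdeg E x0 <= #|e|) ->
  chromatic_index E <= #|V|.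
Proof.
move=> hyp loop lin EU dis ar H7 H8.
case: (eqVneq E set0) => [E0|E0].
  apply: (@chi_le _ _ _ (fun _ => 0)); split => f; by rewrite E0 inE.
case: (low_or_full hyp loop lin EU ar H8 (subxx E) E0) => [low|[k Fk]].
  have [c cp] : exists c, proper_on E #|V| c.
    apply: greedy => G GE G0.
    case: (low_or_full hyp loop lin EU ar H8 GE G0) => [//|[k Fk]].
    by rewrite (full_eq hyp loop lin GE Fk).
  exact: chi_le cp.
have [c cp] := affine hyp loop lin Fk E0.
exact: chi_le cp.
Qed.
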